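(* Let $G$ be a $k$-connected cograph on $n$ vertices with cotree $T$, let $w_1,\ldots,w_t$ be the children of the root of $T$, and let $G_i$ be the subgraph induced by the leaves of the subtree rooted at $w_i$. For every $i$ with $|V(G_i)|=n-k$, let $x_i\in V(G_i)$ be a vertex minimizing $|\overline{N}_G(x_i)|$. Then every set $E_{ca}\subseteq E(\overline{G})$ such that $G\cup E_{ca}$ is a $(k+1)$-connected cograph satisfies $|E_{ca}|\geq \sum_{i:\,|V(G_i)|=n-k}|\overline{N}_G(x_i)|$.
   Context: A cograph is a graph that can be built from single vertices by repeatedly taking disjoint unions (label 0) and joins (label 1); equivalently a graph with no induced path on four vertices. The cotree of a cograph is the unique rooted tree whose leaves are the vertices, internal nodes labelled 0/1 with at least two children and labels alternating along root-to-leaf paths, two vertices being adjacent iff their lowest common ancestor is labelled 1; for connected cographs the root is labelled 1. $\overline{G}$ is the complement of $G$, $\overline{N}_G(v)=\{u:\{u,v\}\in E(\overline{G})\}$, and $G\cup F$ is the graph $(V(G),E(G)\cup F)$. A vertex separator of a connected graph is a set whose removal disconnects it; minimal if no proper subset is a vertex separator; a minimum vertex separator is a minimal one of least size. The paper calls a graph $k$-connected if there exists a minimum vertex separator of size $k$. *)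

(* Defs.v *)
(* Simple graphs on a finite vertex type T given by a
   symmetric irreflexive boolean relation e. *)
From mathcomp Require Import all_boot.
Set Implicit Arguments. Unset Strict Implicit. Unset Printing Implicit Defensive.

Section Graphs.
Variable T : finType.

Definition compl (e : rel T) : rel T := fun x y => (x != y) && ~~ e x y.

Definition cnbr (e : rel T) (v : T) : {set T} := [set u | compl e v u].

(* G \cup F, F a set of (unordered) edges, each a 2-element vertex set *)
Definition gunion (e : rel T) (F : {set {set T}}) : rel T :=
  fun x y => e x y || ([set x; y] \in F).

Definition compl_edges (e : rel T) (F : {set {set T}}) : Prop :=
  forall f, f \in F -> exists x y, f = [set x; y] /\ compl e x y.

Definition cograph (e : rel T) : Prop :=
  forall a b c d : T, uniq [:: a; b; c; d] ->
    ~ [&& e a b, e b c, e c d, ~~ e a c, ~~ e b d & ~~ e a d].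

Definition gconnected (e : rel T) : Prop := forall u v, connect e u v.

Definition del (e : rel T) (S : {set T}) : rel T :=
  fun x y => [&& e x y, x \notin S & y \notin S].

Definition vsep (e : rel T) (S : {set T}) : Prop :=
  exists u v, [/\ u \notin S, v \notin S & ~~ connect (del e S) u v].

Definition minimal_vsep (e : rel T) (S : {set T}) : Prop :=
  vsep e S /\ forall S' : {set T}, S' \proper S -> ~ vsep e S'.

Definition minimum_vsep (e : rel T) (S : {set T}) : Prop :=
  minimal_vsep e S /\ forall S' : {set T}, minimal_vsep e S' -> #|S| <= #|S'|.

(* the paper's "k-connected": connected and has a minimum vertex separator of size k *)
Definition k_connected (e : rel T) (k : nat) : Prop :=
  gconnected e /\ exists S, minimum_vsep e S /\ #|S| = k.

(* vertex sets of the graphs G_i induced by the children of the cotree root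
   of a connected cograph: the connected components of the complement *)
Definition cocomps (e : rel T) : {set {set T}} :=
  [set [set y | connect (compl e) x y] | x : T].

End Graphs.

(* Main.v *)
Require Import Defs.
From mathcomp Require Import all_boot.
From mathcomp Require Import zify.
From Stdlib Require Import Classical_Prop.
Set Implicit Arguments. Unset Strict Implicit. Unset Printing Implicit Defensive.

Lemma walk (T : finType) (r : rel T) (P : pred T) x y :
  connect r x y -> P x -> ~~ P y ->
  exists a b, [/\ connect r x a, r a b, P a & ~~ P b].
Proof.
move=> /connectP [p]; elim: p x => [|z p IH] x /=.
  by move=> _ -> ->.
move=> /andP [rxz pzp] ye Px nPy.
case Pz: (P z).
- have [a [b [c1 r2 P3 P4]]] := IH z pzp ye Pz nPy.
  by exists a, b; split=> //; exact: connect_trans (connect1 rxz) c1.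
- by exists x, z; split=> //; rewrite Pz.
Qed.

Lemma conn_del_notin (T : finType) (r : rel T) S z y :
  connect (del r S) z y -> z \notin S -> y \notin S.
Proof.
move=> c zS; apply/negP=> yS.
have nP : ~~ (y \notin S) by rewrite negbK.
have [a [b [_ /and3P [_ _ bS] _ /negPn bS']]] :=
  walk (P := fun t => t \notin S) c zS nP.
by rewrite bS' in bS.
Qed.

Lemma noconn (T : finType) (r : rel T) (Z : {set T}) x y :
  (forall a b, r a b -> a \in Z -> b \in Z) -> x \in Z -> y \notin Z ->
  ~~ connect r x y.
Proof.
move=> cl xZ yZ; apply/negP => c.
have [a [b [_ rab aZ bZ]]] := walk (P := mem Z) c xZ yZ.
exact: (negP bZ (cl _ _ rab aZ)).
Qed.

Lemma stay (T : finType) (r : rel T) (C : {set T}) p q :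
  (forall x y, r x y -> x \in C -> y \in C) -> p \in C ->
  connect r p q -> connect (del r (~: C)) p q.
Proof.
move=> cl pC /connectP [s]; elim: s p pC => [|z s IH] p pC /=.
  by move=> _ ->.
move=> /andP [rpz ps] qe.
apply: connect_trans (connect1 _) (IH z (cl _ _ rpz pC) ps qe).
by rewrite /del rpz !inE pC (cl _ _ rpz pC).
Qed.

Lemma del_sym (T : finType) (r : rel T) S : symmetric r -> symmetric (del r S).
Proof. by move=> rs x y; rewrite /del rs [(x \notin S) && _]andbC. Qed.

Definition dist2 (T : finType) (h : rel T) u v :=
  [|| u == v, h u v | [exists z, h u z && h z v]].

Lemma uniq4 (T : eqType) (a b c d : T) :
  a != b -> a != c -> a != d -> b != c -> b != d -> c != d -> uniq [:: a; b; c; d].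
Proof.
by move=> ab ac ad bc bd cd; rewrite /= !inE !negb_or ab ac ad bc bd cd.
Qed.

Lemma uniq4P (T : eqType) (a b c d : T) : uniq [:: a; b; c; d] ->
  [&& a != b, a != c, a != d, b != c, b != d & c != d].
Proof.
by rewrite /= !inE !negb_or => /and4P [/and3P [-> -> ->] /andP [-> ->] -> _].
Qed.

Lemma dist2_step (T : finType) (h : rel T) : symmetric h -> irreflexive h -> cograph h ->
  forall a b c, h a b -> dist2 h b c -> dist2 h a c.
Proof.
move=> hs hi hc a b c hab /or3P [/eqP <-|hbc|/existsP [z /andP [hbz hzc]]].
- by rewrite /dist2 hab orbT.
- rewrite /dist2; case: eqP => //= _; apply/orP; right; apply/existsP; exists b.
  by rewrite hab.
- rewrite /dist2; case ac: (a == c) => //=; case hac: (h a c) => //=.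
  apply/existsP; case haz: (h a z); first by exists z; rewrite haz.
  case hbc: (h b c); first by exists b; rewrite hab.
  exfalso; apply: (hc a b z c).
  + have ab : a != b by apply: contraTneq hab => ->; rewrite hi.
    have bz : b != z by apply: contraTneq hbz => ->; rewrite hi.
    have zc : z != c by apply: contraTneq hzc => ->; rewrite hi.
    have az : a != z by apply: contraFneq hac => ->.
    have bc : b != c by apply: contraFneq hac => <-.
    by apply: uniq4 => //; rewrite ac.
  + by rewrite hab hbz hzc haz hbc hac.
Qed.

Lemma conn_dist2 (T : finType) (h : rel T) : symmetric h -> irreflexive h -> cograph h ->
  forall u v, connect h u v -> dist2 h u v.
Proof.
move=> hs hi hc u v /connectP [p]; elim: p u => [|y p IH] u /=.
  by move=> _ ->; rewrite /dist2 eqxx.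
move=> /andP [huy pp] ve; exact: dist2_step huy (IH _ pp ve).
Qed.

Lemma compl_irr (T : finType) (g : rel T) : irreflexive (compl g).
Proof. by move=> x; rewrite /compl eqxx. Qed.

Lemma compl_sym (T : finType) (g : rel T) : symmetric g -> symmetric (compl g).
Proof. by move=> gs x y; rewrite /compl eq_sym gs. Qed.

Lemma complK (T : finType) (g : rel T) : irreflexive g -> compl (compl g) =2 g.
Proof.
move=> gi x y; rewrite /compl; case: (eqVneq x y) => [->|nxy].
  by rewrite gi.
by rewrite /= negbK.
Qed.

Lemma ncompl (T : finType) (g : rel T) x y : x != y -> ~~ compl g x y = g x y.
Proof. by move=> nxy; rewrite /compl nxy negbK. Qed.

Lemma complE (T : finType) (g : rel T) x y : x != y -> compl g x y = ~~ g x y.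
Proof. by move=> nxy; rewrite /compl nxy. Qed.

Lemma cograph_compl (T : finType) (g : rel T) :
  symmetric g -> irreflexive g -> cograph g -> cograph (compl g).
Proof.
move=> gs gi gc a b c d u H.
have /and5P [ab ac ad bc /andP [bd cd]] := uniq4P u.
move: H => /and5P [cab cbc ccd ncac /andP [ncbd ncad]].
apply: (gc b d a c).
  apply: uniq4 => //; by rewrite eq_sym.
rewrite (ncompl _ bd) in ncbd; rewrite (ncompl _ ad) in ncad; rewrite (ncompl _ ac) in ncac.
rewrite (complE _ ab) in cab; rewrite (complE _ cd) in ccd; rewrite (complE _ bc) in cbc.
by rewrite ncbd gs ncad ncac gs cab gs ccd cbc.
Qed.

Lemma core (T : finType) (g : rel T) : symmetric g -> irreflexive g -> cograph g ->
  forall (C : {set T}) s u v, s \in C -> u \in C :\ s -> v \in C :\ s ->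
  ~~ connect (del g (~: (C :\ s))) u v ->
  (exists p q, [/\ p \in C, q \in C & ~~ connect (del g (~: C)) p q]) \/
  (exists p q, [/\ p \in C, q \in C & ~~ connect (del (compl g) (~: C)) p q]).
Proof.
move=> gs gi gc C s u v sC uC vC nuv.
apply: NNPP => H; have [H1 H2] := not_or_and _ _ H.
have Gc : forall p q, p \in C -> q \in C -> connect (del g (~: C)) p q.
  move=> p q pC qC; apply: NNPP => np; apply: H1; exists p, q; split => //; exact/negP.
have Hc : forall p q, p \in C -> q \in C -> connect (del (compl g) (~: C)) p q.
  move=> p q pC qC; apply: NNPP => np; apply: H2; exists p, q; split => //; exact/negP.
set S := ~: (C :\ s).
set g2 := del g S.
have g2s : connect_sym g2 := sym_connect_sym (del_sym S gs).
have notS : forall y, (y \notin S) = (y \in C :\ s) by move=> y; rewrite inE negbK.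
have sS : s \in S by rewrite inE !inE eqxx.
have inCs : forall y, y \in C :\ s -> y \in C by move=> y; rewrite inE => /andP [].
have nb : forall z, z \in C :\ s -> exists a, connect g2 z a /\ g s a.
  move=> z zC.
  have ncs : ~~ connect g2 z s.
    apply/negP => c; have := conn_del_notin c; rewrite notS => /(_ zC).
    by rewrite notS !inE eqxx.
  have [a [b [_ g1ab cza ncb]]] :=
    walk (P := connect g2 z) (Gc z s (inCs _ zC) sC) (connect0 _ _) ncs.
  move: g1ab => /and3P [gab aC bC].
  case: (eqVneq b s) => [bs | bns].
    by exists a; split => //; rewrite gs -bs.
  exfalso.
  have aS : a \notin S by have := conn_del_notin cza; rewrite !notS => /(_ zC).
  have bS : b \notin S by rewrite notS !inE bns; move: bC; rewrite inE negbK.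
  have : connect g2 z b by apply: connect_trans cza (connect1 _); rewrite /g2 /del gab aS bS.
  by rewrite (negbTE ncb).
have vC' := inCs _ vC.
have vs : v != s by move: vC; rewrite !inE => /andP [].
have [a0 [w [_ hw /eqP as_ nws]]] :=
  walk (P := fun y => y == s) (Hc s v sC vC') (eqxx s) vs.
move: hw; rewrite as_ => /and3P [csw _ wC].
move: wC; rewrite inE negbK => wC.
have wCs : w \in C :\ s by rewrite !inE nws wC.
have ngsw : ~~ g s w by move: csw; rewrite /compl => /andP [].
have [z [zC nwz]] : exists z, z \in C :\ s /\ ~~ connect g2 w z.
  case cwu: (connect g2 w u).
    exists v; split => //; apply: contra nuv => cwv.
    by rewrite g2s in cwu; exact: connect_trans cwu cwv.
  by exists u; rewrite cwu.
have [a1 [cwa1 gsa1]] := nb w wCs.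
have [c [czc gsc]] := nb z zC.
have ca1w : connect g2 a1 w by rewrite g2s.
have [a [b [ca1a g2ab gsa ngsb]]] := walk (P := g s) ca1w gsa1 ngsw.
move: (g2ab) => /and3P [gab aS bS].
have cS : c \notin S by have := conn_del_notin czc; rewrite !notS => /(_ zC).
have cwa : connect g2 w a := connect_trans cwa1 ca1a.
have cwb : connect g2 w b := connect_trans cwa (connect1 g2ab).
have key : forall y, connect g2 w y -> connect g2 z y -> False.
  move=> y c1 c2; rewrite g2s in c2; move/negP: nwz; apply.
  exact: connect_trans c1 c2.
have nac : ~~ g a c.
  apply/negP => gac; apply: (key c _ czc).
  by apply: connect_trans cwa (connect1 _); rewrite /g2 /del gac aS cS.
have nbc : ~~ g b c.
  apply/negP => gbc; apply: (key c _ czc).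
  by apply: connect_trans cwb (connect1 _); rewrite /g2 /del gbc bS cS.
apply: (gc b a s c).
  apply: uniq4.
  - by apply: contraTneq gab => ->; rewrite gi.
  - by apply: contraTneq sS => <-.
  - by apply: contraTneq gab => ->; rewrite (negbTE nac).
  - by apply: contraTneq sS => <-.
  - by apply/eqP => ac; apply: (key c) => //; rewrite -ac.
  - by apply: contraTneq sS => ->.
by rewrite gs gab gs gsa gsc gs ngsb nac nbc.
Qed.

Lemma seinsche (T : finType) (g : rel T) : symmetric g -> irreflexive g -> cograph g ->
  forall n (C : {set T}), #|C| = n.+2 ->
  (exists p q, [/\ p \in C, q \in C & ~~ connect (del g (~: C)) p q]) \/
  (exists p q, [/\ p \in C, q \in C & ~~ connect (del (compl g) (~: C)) p q]).
Proof.
move=> gs gi gc; elim=> [|n IH] C cC.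
- have /cards2P [s [w [sw CE]]] : #|C| == 2 by rewrite cC.
  have sC : s \in C by rewrite CE !inE eqxx.
  have wC : w \in C by rewrite CE !inE eqxx orbT.
  have wZ : w \notin [set s] by rewrite inE eq_sym.
  have sZ : s \in [set s] by rewrite inE.
  case gsw: (g s w).
  + right; exists s, w; split => //; apply: noconn sZ wZ.
    move=> a b /and3P [cab aC bC]; rewrite inE => /eqP as_; subst a.
    move: bC; rewrite in_setC negbK CE !inE => /orP [// | /eqP bw]; subst b.
    by rewrite /compl gsw andbF in cab.
  + left; exists s, w; split => //; apply: noconn sZ wZ.
    move=> a b /and3P [gab aC bC]; rewrite inE => /eqP as_; subst a.
    move: bC; rewrite in_setC negbK CE !inE => /orP [// | /eqP bw]; subst b.
    by rewrite gsw in gab.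
- have /card_gt0P [s sC] : 0 < #|C| by rewrite cC.
  have cC' : #|C :\ s| = n.+2.
    by move: cC; rewrite (cardsD1 s) sC add1n => [[]].
  case: (IH _ cC') => [[u [v [uC vC nuv]]] | [u [v [uC vC nuv]]]].
  + exact: (core gs gi gc sC uC vC nuv).
  + have := core (compl_sym gs) (@compl_irr _ g) (cograph_compl gs gi gc) sC uC vC nuv.
    case=> [H|[p [q [pC qC npq]]]]; first by right.
    left; exists p, q; split => //.
    rewrite (eq_connect (_ : del (compl (compl g)) (~: C) =2 del g (~: C))) in npq => //.
    by move=> a b; rewrite /del (complK gi).
Qed.

Lemma min_inside (T : finType) (g : rel T) S :
  vsep g S -> exists S0, minimal_vsep g S0 /\ #|S0| <= #|S|.
Proof.
suff : forall n (S : {set T}), #|S| < n -> vsep g S -> exists S0 : {set T}, minimal_vsep g S0 /\ #|S0| <= #|S|.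
  by move=> H; apply: H.
elim=> [//|n IH] S' lt vs.
case: (classic (minimal_vsep g S')) => [m|nm]; first by exists S'.
have [S1 [pS vS1]] : exists S1 : {set T}, S1 \proper S' /\ vsep g S1.
  apply: NNPP => H; apply: nm; split => // S1 pS vS1; apply: H; by exists S1.
have l1 := proper_card pS.
have [S0 [m0 l0]] := IH S1 (leq_trans l1 lt) vS1.
by exists S0; split => //; apply: leq_trans l0 (ltnW l1).
Qed.

Lemma gunion_sym (T : finType) (e : rel T) F : symmetric e -> symmetric (gunion e F).
Proof. by move=> es x y; rewrite /gunion es setUC. Qed.

Lemma gunion_irr (T : finType) (e : rel T) F :
  irreflexive e -> compl_edges e F -> irreflexive (gunion e F).
Proof.
move=> ei hF x; rewrite /gunion ei /=; apply/negbTE/negP => /hF [a [b [H /andP [ab _]]]].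
have : a \in [set x; x] by rewrite H !inE eqxx.
have : b \in [set x; x] by rewrite H !inE eqxx orbT.
rewrite !inE !orbb => /eqP bx /eqP ax.
by rewrite ax bx eqxx in ab.
Qed.

Lemma set2_mem (T : finType) (x y z w : T) : [set x; y] = [set z; w] -> x = z \/ x = w.
Proof.
move=> E; have : x \in [set z; w] by rewrite -E !inE eqxx.
by rewrite !inE => /orP [/eqP|/eqP]; [left|right].
Qed.

Lemma cut_bound (T : finType) (e : rel T) (P Q : {set T}) (X : {set {set T}}) a :
  (forall y, y \in Q -> y \notin P) ->
  (forall y, y \in cnbr e a -> y \in P :|: Q) ->
  (forall p q, p \in P -> q \in Q -> compl e p q -> [set p; q] \in X) ->
  (forall p, p \in P -> exists2 q, q \in Q & compl e p q) ->
  a \in P -> #|cnbr e a| <= #|X|.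
Proof.
move=> dQP NPQ cut ex aP.
pose phi y := if y \in P then
   (if [pick q in Q | compl e y q] is Some q then [set y; q] else set0)
  else [set a; y].
pose Dom := (P :\ a) :|: (cnbr e a :\: P).
have sub1 : cnbr e a \subset Dom.
  apply/subsetP => y yN; move: (yN); rewrite !inE /compl => /andP [ay nay].
  rewrite ay nay eq_sym ay /=; by case: (y \in P).
have pick_ok : forall y, y \in P -> exists2 q, q \in Q & (phi y = [set y; q] /\ compl e y q).
  move=> y yP; rewrite /phi yP; case: pickP => [q /andP [qQ cq] | none].
    by exists q.
  have [q qQ cq] := ex y yP; by have := none q; rewrite qQ cq.
have inj : {in Dom &, injective phi}.
  move=> y1 y2; rewrite !inE => /orP [/andP [y1a P1]|/andP [P1 _]] /orP [/andP [y2a P2]|/andP [P2 _]] E.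
  - have [q1 q1Q [E1 _]] := pick_ok y1 P1; have [q2 q2Q [E2 _]] := pick_ok y2 P2.
    rewrite E1 E2 in E; case: (set2_mem E) => // yq.
    by have := dQP _ q2Q; rewrite -yq P1.
  - have [q1 q1Q [E1 _]] := pick_ok y1 P1.
    rewrite E1 /phi (negbTE P2) in E; case: (set2_mem E) => yy.
      by rewrite yy eqxx in y1a.
    by rewrite -yy P1 in P2.
  - have [q2 q2Q [E2 _]] := pick_ok y2 P2.
    rewrite E2 /phi (negbTE P1) in E; case: (set2_mem (esym E)) => yy.
      by rewrite yy eqxx in y2a.
    by rewrite -yy P2 in P1.
  - rewrite /phi (negbTE P1) (negbTE P2) in E.
    have : y1 \in [set a; y2] by rewrite -E !inE eqxx orbT.
    rewrite !inE => /orP [/eqP y1a|/eqP //].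
    by rewrite y1a aP in P1.
have subX : [set phi y | y in Dom] \subset X.
  apply/subsetP => f /imsetP [y yD ->]; move: yD; rewrite !inE.
  case/orP => [/andP [ya yP] | /andP [nyP ay]].
  - by have [q qQ [-> cq]] := pick_ok y yP; exact: cut.
  - rewrite /phi (negbTE nyP); apply: cut => //.
    have : y \in P :|: Q by apply: NPQ; rewrite inE.
    by rewrite inE (negbTE nyP).
rewrite (leq_trans (subset_leq_card sub1)) // -(card_in_imset inj).
exact: subset_leq_card subX.
Qed.

Lemma class_eq (T : finType) (h : rel T) x z : connect_sym h ->
  z \in [set y | connect h x y] -> [set y | connect h x y] = [set y | connect h z y].
Proof.
move=> hs; rewrite inE => cxz; apply/setP => y; rewrite !inE; apply/idP/idP => c.
  by rewrite hs in cxz; exact: connect_trans cxz c.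
exact: connect_trans cxz c.
Qed.

Lemma cocomp_uniq (T : finType) (e : rel T) C1 C2 z : symmetric e ->
  C1 \in cocomps e -> C2 \in cocomps e -> z \in C1 -> z \in C2 -> C1 = C2.
Proof.
move=> es /imsetP [x1 _ ->] /imsetP [x2 _ ->] z1 z2.
have hs := sym_connect_sym (compl_sym es).
by rewrite (class_eq hs z1) (class_eq hs z2).
Qed.

Lemma sum_le (T : finType) (e : rel T) (F : {set {set T}}) (c : pred {set T}) :
  symmetric e -> (forall f, f \in F -> f != set0) ->
  \sum_(C in cocomps e | c C) #|[set f in F | f \subset C]| <= #|F|.
Proof.
move=> es hF.
have E : forall C : {set T}, #|[set f in F | f \subset C]| = \sum_(f in F) (f \subset C).
  move=> C; rewrite -sum1_card big_mkcond /= [RHS]big_mkcond /=.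
  by apply: eq_bigr => f _; rewrite inE; case: (f \in F); case: (f \subset C).
under eq_bigr do rewrite E.
rewrite exchange_big /= -sum1_card; apply: leq_sum => f fF.
case: (pickP (fun C => [&& C \in cocomps e, c C & f \subset C])) => [C0 /and3P [C0c cC0 fC0] | none].
- rewrite (bigD1 C0) /=; last by rewrite C0c cC0.
  rewrite big1 ?fC0 ?addn0 // => C /andP [/andP [Cc cC] nC].
  case fC: (f \subset C) => //; exfalso.
  have /set0Pn [z zf] := hF f fF.
  move/eqP: nC; apply; apply: (cocomp_uniq es Cc C0c).
    exact: (subsetP fC z zf).
  exact: (subsetP fC0 z zf).
- rewrite big1 // => C /andP [Cc cC]; have := none C; rewrite Cc cC /=.
  by case: (f \subset C).
Qed.

Lemma per_class (T : finType) (e : rel T) (F : {set {set T}}) k (C : {set T}) :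
  symmetric e -> irreflexive e -> cograph e ->
  compl_edges e F -> cograph (gunion e F) ->
  (forall S, vsep (gunion e F) S -> k < #|S|) ->
  C \in cocomps e -> #|C| = #|T| - k -> k.+2 <= #|T| ->
  exists2 y, y \in C & #|cnbr e y| <= #|[set f in F | f \subset C]|.
Proof.
move=> es ei ec hF ec' Hsep /imsetP [x0 _ Cdef] cC k2.
set e' := gunion e F.
have inC : forall y, (y \in C) = connect (compl e) x0 y by move=> y; rewrite Cdef inE.
have hs := sym_connect_sym (compl_sym es).
have clC : forall y z, y \in C -> compl e y z -> z \in C.
  by move=> y z; rewrite !inC => c1 c2; exact: connect_trans c1 (connect1 c2).
have connC : forall p q, p \in C -> q \in C -> connect (compl e) p q.
  move=> p q; rewrite !inC => c1 c2; rewrite hs in c1; exact: connect_trans c1 c2.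
have ce'e : forall y z, compl e' y z -> compl e y z.
  by move=> y z; rewrite /compl /e' /gunion negb_or => /andP [-> /andP [-> _]].
have [u [v [uC vC nuv]]] : exists u v, [/\ u \in C, v \in C & ~~ connect (compl e') u v].
  apply: NNPP => H.
  have Hc : forall p q, p \in C -> q \in C -> connect (del (compl e') (~: C)) p q.
    move=> p q pC qC.
    have c : connect (compl e') p q.
      by apply: NNPP => np; apply: H; exists p, q; split => //; apply/negP.
    apply: stay pC c => y z cyz yC; exact: clC yC (ce'e _ _ cyz).
  have cardC : #|C| = (#|T| - k - 2).+2 by lia.
  case: (seinsche (gunion_sym F es) (gunion_irr ei hF) ec' cardC) =>
     [[p [q [pC qC npq]]] | [p [q [pC qC npq]]]].
  - have vs : vsep e' (~: C) by exists p, q; rewrite !inE !negbK pC qC; split.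
    have := Hsep _ vs; have := cardsC C; lia.
  - by rewrite Hc in npq.
pose D := [set y | (y \in C) && connect (compl e') u y].
pose X := [set f in F | f \subset C].
have cutD : forall a b, a \in D -> b \in C :\: D -> compl e a b -> [set a; b] \in X.
  move=> a b; rewrite !inE => /andP [aC cua] /andP [nbD bC] cab.
  rewrite subUset !sub1set aC bC andbT.
  case e'ab: (e' a b).
    move: e'ab; rewrite /e' /gunion; move: cab; rewrite /compl => /andP [_ /negbTE ->].
    by rewrite andbT; case: ([set a; b] \in F).
  exfalso; move: nbD; rewrite bC /=; apply/negP/negPn.
  apply: connect_trans cua (connect1 _).
  by move: cab; rewrite /compl e'ab andbT => /andP [].
have NC : forall y z, y \in C -> z \in cnbr e y -> z \in C.
  by move=> y z yC; rewrite inE; apply: clC.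
have uD : u \in D by rewrite inE uC connect0.
have vD : v \in C :\: D by rewrite !inE vC (negbTE nuv).
case A1: [forall a in D, exists b in C :\: D, compl e a b].
  exists u => //; apply: (cut_bound (P := D) (Q := C :\: D)) => //.
  - by move=> y; rewrite inE => /andP [].
  - move=> z zN; have zC := NC _ _ uC zN.
    by rewrite !inE zC /=; case: (connect _ u z).
  - move=> p pD; move/forall_inP: A1 => /(_ p pD) /exists_inP [q qQ cq].
    by exists q.
case A2: [forall b in C :\: D, exists a in D, compl e b a].
  exists v => //; apply: (cut_bound (P := C :\: D) (Q := D)) => //.
  - by move=> y yD; rewrite inE yD.
  - move=> z zN; have zC := NC _ _ vC zN.
    by rewrite !inE zC /=; case: (connect _ u z).
  - move=> p q pQ qD cpq; rewrite setUC; apply: cutD => //.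
    by rewrite (compl_sym es).
  - move=> p pD; move/forall_inP: A2 => /(_ p pD) /exists_inP [q qQ cq].
    by exists q.
exfalso.
move/negbT: A1 => /forall_inPn [a aD /exists_inPn na].
move/negbT: A2 => /forall_inPn [b bD /exists_inPn nb].
have aC : a \in C by move: aD; rewrite inE => /andP [].
have bC : b \in C by move: bD; rewrite inE => /andP [].
have := conn_dist2 (compl_sym es) (@compl_irr _ e) (cograph_compl es ei ec) (connC a b aC bC).
case/or3P => [/eqP ab | cab | /existsP [z /andP [caz czb]]].
- by move: bD aD; rewrite -ab !inE => /andP [nD _] aD'; rewrite aD' in nD.
- by move: (na b bD); rewrite cab.
- have zC := clC _ _ aC caz.
  case zD: (z \in D).
    by move: (nb z zD); rewrite (compl_sym es) czb.
  by move: (na z); rewrite inE zD zC caz => /(_ isT).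
Qed.

Theorem lemma4 (T : finType) (e : rel T)
  (e_sym : symmetric e) (e_irr : irreflexive e) (k : nat)
  (Hcog : cograph e) (Hk : k_connected e k)
  (x : {set T} -> T)
  (Hx : forall C, C \in cocomps e -> #|C| = #|T| - k ->
          x C \in C /\ (forall y, y \in C -> #|cnbr e (x C)| <= #|cnbr e y|)) :
  forall F : {set {set T}}, compl_edges e F ->
    cograph (gunion e F) -> k_connected (gunion e F) k.+1 ->
    \sum_(C in cocomps e | #|C| == #|T| - k) #|cnbr e (x C)| <= #|F|.
Proof.
move=> F hF Hcog' Hk'.
have [_ [S0 [[[[u0 [v0 [u0S v0S nc]]] _] _] cS0]]] := Hk.
have uv : u0 != v0 by apply: contraNneq nc => ->; exact: connect0.
have k2 : k.+2 <= #|T|.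
  have : #|S0| <= #|~: [set u0; v0]|.
    apply: subset_leq_card; apply/subsetP => y yS; rewrite !inE negb_or.
    apply/andP; split.
      by apply: contraTneq yS => ->.
    by apply: contraTneq yS => ->.
  have := cardsC [set u0; v0]; rewrite cards2 uv; lia.
have Hsep : forall S, vsep (gunion e F) S -> k < #|S|.
  move=> S vS; have [S0' [m0 l0]] := min_inside vS.
  have [_ [S1 [[_ mS1] cS1]]] := Hk'.
  have := mS1 _ m0; lia.
apply: (@leq_trans (\sum_(C in cocomps e | #|C| == #|T| - k) #|[set f in F | f \subset C]|)).
  apply: leq_sum => C /andP [CC /eqP cC].
  have [y yC le] := per_class e_sym e_irr Hcog hF Hcog' Hsep CC cC k2.
  have [_ xmin] := Hx C CC cC.
  exact: leq_trans (xmin y yC) le.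
apply: sum_le => // f /hF [a [b [-> _]]].
by apply/set0Pn; exists a; rewrite !inE eqxx.
Qed.
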